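(* Let $\alpha,\beta$ be positive integers, let $a>0$ and $b$ be real numbers, and for each non-negative integer $n$ let $$S_n=\{n\alpha+j\beta : j\in\mathbb{Z}_{\geq0},\ j>an+b\}\subset\mathbb{Z}.$$ Let $g'=\gcd(\alpha,\beta)$ and $B_0=\beta^2(\alpha+a(1+\beta))+\beta$. Then for every $B\geq B_0$, every non-negative integer $n$, and every multiple $M$ of $g'$ with $M\geq\min(S_n)+B$, there is an integer $i$ with $n\leq i<n+\beta(\beta+1)$ such that $M\in S_i$. *)

(* Defs.v *)
From Stdlib Require Import Reals ZArith Lia Lra.
Open Scope R_scope.

Definition in_S (alpha beta : Z) (a b : R) (n : nat) (m : Z) : Prop :=
  exists j : Z, (0 <= j)%Z /\ IZR j > a * INR n + b /\
                m = (Z.of_nat n * alpha + j * beta)%Z.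

Definition is_min_S (alpha beta : Z) (a b : R) (n : nat) (m : Z) : Prop :=
  in_S alpha beta a b n m /\ forall x, in_S alpha beta a b n x -> (m <= x)%Z.

(* Main.v *)
Require Import Defs.
From Stdlib Require Import Reals ZArith.
From Stdlib Require Import Znumtheory Lia Lra Psatz.
Open Scope R_scope.

Theorem mainTheorem18 (alpha beta : Z) (a b : R)
  (Halpha : (0 < alpha)%Z) (Hbeta : (0 < beta)%Z) (Ha : 0 < a) :
  let g' := Z.gcd alpha beta in
  let B0 := IZR beta ^ 2 * (IZR alpha + a * (1 + IZR beta)) + IZR beta in
  forall (B : R), B >= B0 ->
  forall (n : nat) (mn : Z), is_min_S alpha beta a b n mn ->
  forall (M : Z), (g' | M)%Z -> IZR M >= IZR mn + B ->
  exists i : nat, (n <= i < n + Z.to_nat (beta * (beta + 1)))%nat /\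
                  in_S alpha beta a b i M.
Proof.
  intros g' B0 B HB n mn [[jn [Hjn0 [Hjn Hmn]]] _] M [t Ht] HM.
  destruct (Zis_gcd_bezout _ _ _ (Zgcd_is_gcd alpha beta)) as [u v Huv].
  set (q := ((t*u - Z.of_nat n) / beta)%Z).
  set (k := ((t*u - Z.of_nat n) mod beta)%Z).
  assert (Hdm : (t*u - Z.of_nat n = beta * q + k)%Z) by (apply Z.div_mod; lia).
  assert (Hk : (0 <= k < beta)%Z) by (apply Z.mod_pos_bound; lia).
  set (j := (q * alpha + t * v)%Z).
  assert (HMj : (M = (Z.of_nat n + k) * alpha + j * beta)%Z).
  { unfold j. rewrite Ht. unfold g'. rewrite <- Huv.
    assert (Hk' : (k = t*u - Z.of_nat n - beta*q)%Z) by lia. rewrite Hk'. ring. }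
  assert (Hbb : (beta <= beta * (beta + 1))%Z) by nia.
  exists (Z.to_nat (Z.of_nat n + k)).
  assert (HiR : INR (Z.to_nat (Z.of_nat n + k)) = INR n + IZR k).
  { rewrite INR_IZR_INZ, Z2Nat.id by lia. rewrite plus_IZR, <- INR_IZR_INZ. reflexivity. }
  assert (HMR : IZR M = (INR n + IZR k) * IZR alpha + IZR j * IZR beta).
  { rewrite HMj, plus_IZR, !mult_IZR, plus_IZR, <- INR_IZR_INZ. reflexivity. }
  assert (HmnR : IZR mn = INR n * IZR alpha + IZR jn * IZR beta).
  { rewrite Hmn, plus_IZR, !mult_IZR, <- INR_IZR_INZ. reflexivity. }
  assert (Hal : 1 <= IZR alpha) by (apply IZR_le; lia).
  assert (Hbe : 1 <= IZR beta) by (apply IZR_le; lia).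
  assert (Hk0 : 0 <= IZR k) by (apply IZR_le; lia).
  assert (Hk1 : IZR k <= IZR beta - 1).
  { rewrite <- minus_IZR. apply IZR_le; lia. }
  assert (Hjn0R : 0 <= IZR jn) by (apply IZR_le; lia).
  assert (Hn0 : 0 <= INR n) by apply pos_INR.
  set (J := IZR j) in *. set (al := IZR alpha) in *. set (be := IZR beta) in *.
  set (kk := IZR k) in *. set (jj := IZR jn) in *.
  assert (H1 : J * be >= jj * be + B - kk * al) by (unfold B0 in HB; lra).
  assert (H2 : kk * al <= (be - 1) * al) by nra.
  assert (H3 : be * be * al >= be * al) by nra.
  assert (H4 : (J - jj - a * be) * be > 0).
  { unfold B0 in HB. assert (be ^ 2 = be * be) by ring.
    assert (a * be * be * be >= 0) by (apply Rle_ge; repeat apply Rmult_le_pos; lra).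
    nra. }
  assert (H5 : J - jj - a * be > 0).
  { destruct (Rle_dec (J - jj - a*be) 0); [|lra].
    assert ((J - jj - a * be) * be <= 0) by nra. lra. }
  assert (H6 : a * kk <= a * (be - 1)) by nra.
  split.
  - lia.
  - exists j. split; [|split].
    + assert (0 < a * be) by (apply Rmult_lt_0_compat; lra). assert (0 < J) by lra. apply le_IZR. unfold J in *. lra.
    + rewrite HiR. fold kk. fold J. lra.
    + rewrite HMj. rewrite Z2Nat.id by lia. reflexivity.
Qed.
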